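(* Let $R$ be a ring, $S$ an almost left Ore set of $R$, $\mathfrak{a}=\mathrm{ass}_R(S)$, and $\mathfrak{a}_r$ the ideal of $R$ generated by $\mathrm{ass}_r(S)=\{r\in R:rs=0\text{ for some }s\in S\}$. Then \begin{enumerate} \item $S_r:=(S+\mathfrak{a}_r)/\mathfrak{a}_r$ is a left Ore set of $R/\mathfrak{a}_r$. \item The following are equivalent: $S$ is left localizable in $R$; $S_r$ is left localizable in $R/\mathfrak{a}_r$; ${}'\mathfrak{a}(S_r)\neq R/\mathfrak{a}_r$; ${}'\mathfrak{a}(S)\ne R$. \item Suppose ${}'\mathfrak{a}:={}'\mathfrak{a}(S)\neq R$. Let ${}'\pi:R\to{}'R=R/{}'\mathfrak{a}$, $r\mapsto{}'r=r+{}'\mathfrak{a}$, and ${}'S={}'\pi(S)$. Then \begin{enumerate} \item ${}'S$ is a left denominator set of ${}'R$ contained in ${}'\mathcal{C}_{{}'R}$; \item $\mathfrak{a}={}'\pi^{-1}(\mathrm{ass}_l({}'S))$; \item $R\langle S^{-1}\rangle\simeq{}'S^{-1}\,{}'R$, an $R$-isomorphism. \end{enumerate} \end{enumerate}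
   Context: Rings are associative with $1$. Multiplicative set: $SS\subseteq S$, $1\in S$, $0\notin S$. Almost left Ore set: for all $s\in S,r\in R$ there are $s_1,s_2\in S$, $r_1\in R$ with $(s_1r-r_1s)s_2=0$. Left Ore set: $Sr\cap Rs\ne\emptyset$ for all $r\in R,s\in S$; left denominator set: left Ore and $rs=0$ ($s\in S$) implies $tr=0$ for some $t\in S$; $T^{-1}A$ is the left Ore localization; $\mathrm{ass}_l(T)=\{a:ta=0\text{ for some }t\in T\}$. For a multiplicative set $T$ of a ring $A$: $A\langle T^{-1}\rangle=A\langle X_T\rangle/I_T$ ($A\langle X_T\rangle$ freely generated by $A$ and noncommuting $x_t$, $I_T$ generated by $tx_t-1,x_tt-1$); $\mathrm{ass}_A(T)=\ker(A\to A\langle T^{-1}\rangle)$; $T$ is left localizable if $A\langle T^{-1}\rangle\neq0$ and every element has the form $(x_t+I_T)(a+I_T)$. ${}'\mathcal{C}_A=\{a\in A: xa=0\Rightarrow x=0\}$, and ${}'\mathfrak{a}(T)$ is the least ideal $\mathfrak{b}$ of $A$ such that the image of $T$ in $A/\mathfrak{b}$ lies in ${}'\mathcal{C}_{A/\mathfrak{b}}$ (it exists). *)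

(* Defs.v *)
From HB Require Import structures.
From mathcomp Require Import all_boot all_algebra.
From mathcomp Require Import generic_quotient.
From mathcomp Require Import boolp.

Set Implicit Arguments.
Unset Strict Implicit.
Unset Printing Implicit Defensive.

Import GRing.Theory.
Local Open Scope ring_scope.
Local Open Scope quotient_scope.

(* Rings are associative with 1; we use pzRingType so that the zero ring
   (e.g. a quotient R/R, or a universal localization equal to 0) is allowed. *)

Definition is_ideal (A : pzRingType) (I : A -> Prop) : Prop :=
  [/\ I 0, (forall x y, I x -> I y -> I (x - y)),
      (forall r x, I x -> I (r * x)) & (forall r x, I x -> I (x * r))].

Record ideal (A : pzRingType) := Ideal {
  ideal_mem :> A -> Prop;
  idealP : is_ideal ideal_mem }.

Definition gen_ideal (A : pzRingType) (X : A -> Prop) : A -> Prop :=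
  fun a => forall J : A -> Prop, is_ideal J -> (forall x, X x -> J x) -> J a.

Lemma gen_ideal_is_ideal (A : pzRingType) (X : A -> Prop) :
  is_ideal (gen_ideal X).
Proof.
split.
- by move=> J [] *.
- by move=> x y Hx Hy J HJ HX; case: (HJ) => _ HSub _ _; apply: (HSub); [apply: Hx|apply: Hy].
- by move=> r x Hx J HJ HX; case: (HJ) => _ _ HL _; apply: (HL); apply: Hx.
- by move=> r x Hx J HJ HX; case: (HJ) => _ _ _ HR; apply: (HR); apply: Hx.
Qed.

Definition gen_ideal_ideal (A : pzRingType) (X : A -> Prop) : ideal A :=
  Ideal (gen_ideal_is_ideal X).

Section Quotient.
Variables (A : pzRingType) (I : ideal A).

Definition qrel (x y : A) : bool := `[< I (x - y) >].

Lemma qrel_refl : reflexive qrel.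
Proof. by move=> x; apply/asboolP; rewrite subrr; case: (idealP I). Qed.

Lemma qrel_sym : symmetric qrel.
Proof.
move=> x y; apply/asboolP/asboolP => H; case: (idealP I) => H0 HSub _ _;
  by have := HSub _ _ H0 H; rewrite sub0r opprB.
Qed.

Lemma qrel_trans : transitive qrel.
Proof.
move=> y x z /asboolP Hxy /asboolP Hyz; apply/asboolP.
case: (idealP I) => H0 HSub _ _.
have := HSub _ _ Hxy (HSub _ _ H0 Hyz).
by rewrite sub0r opprB opprB addrA subrK.
Qed.

Canonical qrel_equiv := EquivRel qrel qrel_refl qrel_sym qrel_trans.

Definition quot := {eq_quot qrel_equiv}.
HB.instance Definition _ := Choice.on quot.

Definition qpi (a : A) : quot := \pi_quot a.

Lemma qpiP (x y : A) : qpi x = qpi y <-> I (x - y).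
Proof.
split=> [/eqquotP/asboolP //|H]; apply/eqquotP; exact/asboolP.
Qed.

Lemma qpi_repr (q : quot) : qpi (repr q) = q.
Proof. exact: reprK. Qed.

Lemma qpi_ind (P : quot -> Prop) : (forall a, P (qpi a)) -> forall q, P q.
Proof. by move=> H q; rewrite -(qpi_repr q); apply: H. Qed.

Definition qzero : quot := qpi 0.
Definition qopp (q : quot) : quot := qpi (- repr q).
Definition qadd (p q : quot) : quot := qpi (repr p + repr q).
Definition qone : quot := qpi 1.
Definition qmul (p q : quot) : quot := qpi (repr p * repr q).

Lemma reprP (a : A) : I (repr (qpi a) - a).
Proof. by apply/qpiP; rewrite qpi_repr. Qed.

Lemma qoppE a : qopp (qpi a) = qpi (- a).
Proof.
apply/qpiP; have := reprP a; case: (idealP I) => H0 HSub _ _ H.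
by rewrite opprK addrC; have := HSub _ _ H0 H; rewrite sub0r opprB.
Qed.

Lemma qaddE a b : qadd (qpi a) (qpi b) = qpi (a + b).
Proof.
apply/qpiP; have Ha := reprP a; have Hb := reprP b.
case: (idealP I) => H0 HSub _ _.
have E : repr (qpi a) + repr (qpi b) - (a + b) =
  (repr (qpi a) - a) - (0 - (repr (qpi b) - b)).
  by rewrite sub0r opprK opprD addrACA.
by rewrite E; apply: (HSub) => //; apply: (HSub).
Qed.

Lemma qmulE a b : qmul (qpi a) (qpi b) = qpi (a * b).
Proof.
apply/qpiP; have Ha := reprP a; have Hb := reprP b.
case: (idealP I) => H0 HSub HL HR.
have E : repr (qpi a) * repr (qpi b) - a * b =
  (repr (qpi a) - a) * repr (qpi b) - (- (a * (repr (qpi b) - b))).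
  by rewrite mulrBl mulrBr opprK addrA subrK.
by rewrite E; apply: (HSub); [apply: (HR)|rewrite -sub0r; apply: (HSub) => //; apply: (HL)].
Qed.

Lemma q_addrA : associative qadd.
Proof.
by elim/qpi_ind=> x; elim/qpi_ind=> y; elim/qpi_ind=> z; rewrite !qaddE addrA.
Qed.
Lemma q_addrC : commutative qadd.
Proof. by elim/qpi_ind=> x; elim/qpi_ind=> y; rewrite !qaddE addrC. Qed.
Lemma q_add0r : left_id qzero qadd.
Proof. by elim/qpi_ind=> x; rewrite /qzero qaddE add0r. Qed.
Lemma q_addNr : left_inverse qzero qopp qadd.
Proof. by elim/qpi_ind=> x; rewrite qoppE qaddE addNr. Qed.
Lemma q_mulrA : associative qmul.
Proof.
by elim/qpi_ind=> x; elim/qpi_ind=> y; elim/qpi_ind=> z; rewrite !qmulE mulrA.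
Qed.
Lemma q_mul1r : left_id qone qmul.
Proof. by elim/qpi_ind=> x; rewrite /qone qmulE mul1r. Qed.
Lemma q_mulr1 : right_id qone qmul.
Proof. by elim/qpi_ind=> x; rewrite /qone qmulE mulr1. Qed.
Lemma q_mulrDl : left_distributive qmul qadd.
Proof.
by elim/qpi_ind=> x; elim/qpi_ind=> y; elim/qpi_ind=> z;
  rewrite !(qaddE, qmulE) mulrDl.
Qed.
Lemma q_mulrDr : right_distributive qmul qadd.
Proof.
by elim/qpi_ind=> x; elim/qpi_ind=> y; elim/qpi_ind=> z;
  rewrite !(qaddE, qmulE) mulrDr.
Qed.

HB.instance Definition _ := GRing.isPzRing.Build quot
  q_addrA q_addrC q_add0r q_addNr q_mulrA q_mul1r q_mulr1 q_mulrDl q_mulrDr.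

Lemma qpi_is_nmod_morphism : nmod_morphism qpi.
Proof. by rewrite /nmod_morphism; split=> // x y; exact: (esym (qaddE x y)). Qed.

Lemma qpi_is_monoid_morphism : monoid_morphism qpi.
Proof. by rewrite /monoid_morphism; split=> // x y; exact: (esym (qmulE x y)). Qed.

HB.instance Definition _ := GRing.isNmodMorphism.Build A quot qpi
  qpi_is_nmod_morphism.
HB.instance Definition _ := GRing.isMonoidMorphism.Build A quot qpi
  qpi_is_monoid_morphism.

End Quotient.

Section Sets.
Variable A : pzRingType.
Implicit Types (S T : A -> Prop).

Definition mult_set S : Prop :=
  [/\ (forall s t, S s -> S t -> S (s * t)), S 1 & ~ S 0].

Definition almost_left_ore S : Prop :=
  forall s r, S s -> exists s1 s2 r1,
    [/\ S s1, S s2 & (s1 * r - r1 * s) * s2 = 0].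

Definition left_ore S : Prop :=
  forall r s, S s -> exists s' r', S s' /\ s' * r = r' * s.

Definition left_denominator S : Prop :=
  left_ore S /\ (forall r s, S s -> r * s = 0 -> exists t, S t /\ t * r = 0).

Definition ass_l T : A -> Prop := fun a => exists t, T t /\ t * a = 0.
Definition ass_r T : A -> Prop := fun r => exists t, T t /\ r * t = 0.

Definition lC : A -> Prop := fun a => forall x, x * a = 0 -> x = 0.

End Sets.

Definition image_set (A B : Type) (f : A -> B) (S : A -> Prop) : B -> Prop :=
  fun b => exists a, S a /\ b = f a.

Definition inverts (A B : pzRingType) (f : A -> B) (T : A -> Prop) : Prop :=
  forall t, T t -> exists y, y * f t = 1 /\ f t * y = 1.

(** f : A -> B is the universal T-inverting ring homomorphism, i.e. (B, f) is
    (up to unique A-isomorphism) the canonical map A -> A<T^{-1}>. *)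
Definition is_univ_loc (A B : pzRingType) (T : A -> Prop)
    (f : {rmorphism A -> B}) : Prop :=
  inverts f T /\
  forall (C : pzRingType) (g : {rmorphism A -> C}), inverts g T ->
    exists h : {rmorphism B -> C},
      (forall a, h (f a) = g a) /\
      (forall h' : {rmorphism B -> C}, (forall a, h' (f a) = g a) ->
         forall b, h' b = h b).

(** ass_A(T) = ker (A -> A<T^{-1}>) *)
Definition ass_A (A : pzRingType) (T : A -> Prop) : A -> Prop :=
  fun a => forall (B : pzRingType) (f : {rmorphism A -> B}),
    is_univ_loc T f -> f a = 0.

Definition left_localizable (A : pzRingType) (T : A -> Prop) : Prop :=
  exists (B : pzRingType) (f : {rmorphism A -> B}),
    [/\ is_univ_loc T f, (1 : B) <> 0 &
        forall b : B, exists t a y,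
          [/\ T t, y * f t = 1, f t * y = 1 & b = y * f a]].

Definition prime_a (A : pzRingType) (T : A -> Prop) : A -> Prop :=
  fun a => forall J : ideal A,
    (forall t, T t -> lC (qpi J t)) -> J a.

Lemma prime_a_is_ideal (A : pzRingType) (T : A -> Prop) : is_ideal (prime_a T).
Proof.
split.
- by move=> J _; case: (idealP J).
- by move=> x y Hx Hy J HJ; case: (idealP J) => _ HSub _ _; apply: (HSub); auto.
- by move=> r x Hx J HJ; case: (idealP J) => _ _ HL _; apply: (HL); auto.
- by move=> r x Hx J HJ; case: (idealP J) => _ _ _ HR; apply: (HR); auto.
Qed.

Definition prime_a_ideal (A : pzRingType) (T : A -> Prop) : ideal A :=
  Ideal (prime_a_is_ideal T).

Definition is_left_ore_loc (A Q : pzRingType) (T : A -> Prop)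
    (sigma : {rmorphism A -> Q}) : Prop :=
  [/\ inverts sigma T,
      (forall q : Q, exists t a y,
          [/\ T t, y * sigma t = 1, sigma t * y = 1 & q = y * sigma a]) &
      (forall a, sigma a = 0 <-> ass_l T a)].

(* Main.v *)
Require Import Defs.
From HB Require Import structures.
From mathcomp Require Import all_boot all_algebra generic_quotient boolp.
Set Implicit Arguments. Unset Strict Implicit. Unset Printing Implicit Defensive.
Import GRing.Theory.
Local Open Scope ring_scope.
Local Open Scope quotient_scope.

Section OreLoc.
Variables (A : pzRingType) (T : A -> Prop).
Hypotheses (T1 : T 1) (TM : forall s t, T s -> T t -> T (s * t))
  (Tore : left_ore T) (Treg : forall t, T t -> lC t).

Lemma assl0 : ass_l T 0.
Proof. by exists 1; rewrite mulr0. Qed.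
Lemma asslN a : ass_l T a -> ass_l T (- a).
Proof. by case=> t [Tt Ht]; exists t; rewrite mulrN Ht oppr0. Qed.
Lemma asslD a b : ass_l T a -> ass_l T b -> ass_l T (a + b).
Proof.
case=> t [Tt Ht] [t' [Tt' Ht']].
have [u [x [Tu E]]] := Tore t Tt'.
exists (u * t); split; first exact: TM.
by rewrite mulrDr -mulrA Ht mulr0 add0r E -mulrA Ht' mulr0.
Qed.
Lemma asslM r a : ass_l T a -> ass_l T (r * a).
Proof.
case=> t [Tt Ht]; have [u [x [Tu E]]] := Tore r Tt.
by exists u; split=> //; rewrite mulrA E -mulrA Ht mulr0.
Qed.
Lemma asslK w a : T w -> ass_l T (w * a) -> ass_l T a.
Proof. by move=> Tw [t [Tt Ht]]; exists (t * w); split; [exact: TM|rewrite -mulrA]. Qed.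

Definition eqv (p q : A * A) : Prop :=
  forall x y, x * p.1 = y * q.1 -> ass_l T (x * p.2 - y * q.2).
Definition nz (p : A * A) : A * A := if `[< T p.1 >] then p else (1, 0).
Lemma nzT p : T (nz p).1. Proof. by rewrite /nz; case: asboolP. Qed.
Lemma nzE p : T p.1 -> nz p = p. Proof. by rewrite /nz; case: asboolP. Qed.

Lemma cancelT x y t : T t -> x * t = y * t -> x = y.
Proof.
move=> Tt E; apply/eqP; rewrite -subr_eq0; apply/eqP; apply: (Treg Tt).
by rewrite mulrBl E subrr.
Qed.

Lemma eqv_refl p : T p.1 -> eqv p p.
Proof. by move=> Tp x y /(cancelT Tp) ->; rewrite subrr; exact: assl0. Qed.
Lemma eqv_sym p q : eqv p q -> eqv q p.
Proof. by move=> H x y E; rewrite -opprB; apply: asslN; exact: H. Qed.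
Lemma eqv_trans p q r : T q.1 -> eqv p q -> eqv q r -> eqv p r.
Proof.
move=> Tq Hpq Hqr x z E.
have [w [y [Tw Ew]]] := Tore (x * p.1) Tq.
have H1 := Hpq (w * x) y (ltac:(by rewrite -mulrA)).
have H2 : ass_l T (y * q.2 - (w * z) * r.2).
  by apply: Hqr; rewrite -Ew E mulrA.
apply: (asslK Tw).
have -> : w * (x * p.2 - z * r.2) = (w * x * p.2 - y * q.2) + (y * q.2 - w * z * r.2).
  by rewrite addrA subrK mulrBr !mulrA.
exact: asslD H1 H2.
Qed.

Definition orel (p q : A * A) : bool := `[< eqv (nz p) (nz q) >].
Lemma orel_refl : reflexive orel.
Proof. by move=> p; apply/asboolP; apply: eqv_refl; exact: nzT. Qed.
Lemma orel_sym : symmetric orel.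
Proof. by move=> p q; apply/asboolP/asboolP; exact: eqv_sym. Qed.
Lemma orel_trans : transitive orel.
Proof. by move=> q p r /asboolP H1 /asboolP H2; apply/asboolP; exact: eqv_trans (nzT q) H1 H2. Qed.
Canonical orel_equiv := EquivRel orel orel_refl orel_sym orel_trans.
Definition OQ := {eq_quot orel_equiv}.
HB.instance Definition _ := Choice.on OQ.
Definition frac (s a : A) : OQ := \pi_OQ (s, a).

Lemma fracP s a s' b : T s -> T s' -> frac s a = frac s' b <-> eqv (s, a) (s', b).
Proof.
move=> Ts Ts'; rewrite /frac; split=> [/eqquotP/asboolP|H].
  by rewrite !nzE.
by apply/eqquotP/asboolP; rewrite !nzE.
Qed.

Definition rp (q : OQ) : A * A := nz (repr q).
Lemma rpT q : T (rp q).1. Proof. exact: nzT. Qed.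
Lemma rpE q : q = frac (rp q).1 (rp q).2.
Proof.
rewrite /frac -surjective_pairing -[q in LHS]reprK; apply/eqquotP/asboolP.
rewrite /rp (nzE (nzT _)); apply: eqv_refl; exact: nzT.
Qed.
Lemma rp_eqv s a : T s -> eqv (rp (frac s a)) (s, a).
Proof.
move=> Ts; have := rpE (frac s a); move/esym/fracP; apply=> //; exact: rpT.
Qed.
Lemma frac_ind (P : OQ -> Prop) : (forall s a, T s -> P (frac s a)) -> forall q, P q.
Proof. by move=> H q; rewrite (rpE q); apply: H; exact: rpT. Qed.

Definition oreW (r s : A) : A * A :=
  match pselect (exists p : A * A, T p.1 /\ p.1 * r = p.2 * s) with
  | left H => proj1_sig (cid H) | right _ => (1, 0) end.
Lemma oreWP r s : T s -> T (oreW r s).1 /\ (oreW r s).1 * r = (oreW r s).2 * s.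
Proof.
move=> Ts; rewrite /oreW; case: pselect => [H|N]; first by case: (cid H).
by exfalso; apply: N; have [u [x [Tu E]]] := Tore r Ts; exists (u, x).
Qed.

Definition ozero := frac 1 0.
Definition oone := frac 1 1.
Definition oopp q := frac (rp q).1 (- (rp q).2).
Definition oadd q1 q2 := let w := oreW (rp q1).1 (rp q2).1 in
  frac (w.1 * (rp q1).1) (w.1 * (rp q1).2 + w.2 * (rp q2).2).
Definition omul q1 q2 := let w := oreW (rp q1).2 (rp q2).1 in
  frac (w.1 * (rp q1).1) (w.2 * (rp q2).2).

Lemma opp_spec s a : T s -> oopp (frac s a) = frac s (- a).
Proof.
move=> Ts; have H := rp_eqv (a:=a) Ts; rewrite /oopp; apply/fracP => //; first exact: rpT.
move=> x y E /=; rewrite !mulrN opprK addrC -opprB; apply: asslN; exact: H.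
Qed.

Lemma add_wd s a s1 a1 t b t1 b1 u x u1 x1 :
  eqv (s, a) (s1, a1) -> eqv (t, b) (t1, b1) -> u * s = x * t -> u1 * s1 = x1 * t1 ->
  eqv (u * s, u * a + x * b) (u1 * s1, u1 * a1 + x1 * b1).
Proof.
move=> H1 H2 E E1 p p' /= Ep.
have F1 := H1 (p * u) (p' * u1) (ltac:(by rewrite -!mulrA)).
have F2 := H2 (p * x) (p' * x1) (ltac:(by rewrite /= -!mulrA -E -E1)).
by rewrite !mulrDr !mulrA opprD addrACA; apply: asslD.
Qed.

Lemma add_spec s a t b u x : T s -> T t -> T (u * s) -> u * s = x * t ->
  oadd (frac s a) (frac t b) = frac (u * s) (u * a + x * b).
Proof.
move=> Ts Tt Tus E; rewrite /oadd.
have [Tw Ew] := oreWP (rp (frac s a)).1 (rpT (frac t b)).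
apply/fracP => //; first by apply: TM => //; exact: rpT.
by apply: add_wd Ew E; exact: rp_eqv.
Qed.

Lemma mul_wd s a s1 a1 t b t1 b1 u x u1 x1 :
  eqv (s, a) (s1, a1) -> eqv (t, b) (t1, b1) -> u * a = x * t -> u1 * a1 = x1 * t1 ->
  eqv (u * s, x * b) (u1 * s1, x1 * b1).
Proof.
move=> H1 H2 E E1 p p' /= Ep.
have [w [Tw Hw]] := H1 (p * u) (p' * u1) (ltac:(by rewrite -!mulrA)).
apply: (asslK Tw).
have Ht : (w * p * x) * t = (w * p' * x1) * t1.
  move: Hw => /=; rewrite -!(mulrA p) -!(mulrA p') E E1 mulrBr => /eqP.
  by rewrite subr_eq0 => /eqP; rewrite !mulrA.
by rewrite mulrBr !mulrA; exact: H2 _ _ Ht.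
Qed.

Lemma mul_spec s a t b u x : T s -> T t -> T u -> u * a = x * t ->
  omul (frac s a) (frac t b) = frac (u * s) (x * b).
Proof.
move=> Ts Tt Tu E; rewrite /omul.
have [Tw Ew] := oreWP (rp (frac s a)).2 (rpT (frac t b)).
apply/fracP => //; [by apply: TM => //; exact: rpT|exact: TM|].
by apply: mul_wd Ew E; exact: rp_eqv.
Qed.

Lemma expand s a c d : T s -> T d -> c * s = d -> frac s a = frac d (c * a).
Proof.
move=> Ts Td E; apply/fracP => // x y /=; rewrite -E mulrA => /(cancelT Ts) ->.
by rewrite mulrA subrr; exact: assl0.
Qed.

Lemma add_same d a b : T d -> oadd (frac d a) (frac d b) = frac d (a + b).
Proof. by move=> Td; rewrite (@add_spec _ _ _ _ 1 1) ?mul1r. Qed.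

Lemma common2 s1 s2 : T s1 -> T s2 -> exists d c1 c2, [/\ T d, c1 * s1 = d & c2 * s2 = d].
Proof.
move=> Ts1 Ts2; have [u [x [Tu E]]] := Tore s1 Ts2.
by exists (u * s1), u, x; split => //; exact: TM.
Qed.

Lemma common3 s1 s2 s3 : T s1 -> T s2 -> T s3 ->
  exists d c1 c2 c3, [/\ T d, c1 * s1 = d, c2 * s2 = d & c3 * s3 = d].
Proof.
move=> Ts1 Ts2 Ts3; have [e [c1 [c2 [Te E1 E2]]]] := common2 Ts1 Ts2.
have [d [f [c3 [Td F1 F3]]]] := common2 Te Ts3.
by exists d, (f * c1), (f * c2), c3; split; rewrite // -mulrA ?E1 ?E2.
Qed.

Lemma oaddA : associative oadd.
Proof.
move=> q1 q2 q3; elim/frac_ind: q1 => s1 a1 Ts1; elim/frac_ind: q2 => s2 a2 Ts2.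
elim/frac_ind: q3 => s3 a3 Ts3.
have [d [c1 [c2 [c3 [Td E1 E2 E3]]]]] := common3 Ts1 Ts2 Ts3.
by rewrite (expand a1 Ts1 Td E1) (expand a2 Ts2 Td E2) (expand a3 Ts3 Td E3) !add_same // addrA.
Qed.
Lemma oaddC : commutative oadd.
Proof.
move=> q1 q2; elim/frac_ind: q1 => s1 a1 Ts1; elim/frac_ind: q2 => s2 a2 Ts2.
have [d [c1 [c2 [Td E1 E2]]]] := common2 Ts1 Ts2.
by rewrite (expand a1 Ts1 Td E1) (expand a2 Ts2 Td E2) !add_same // addrC.
Qed.
Lemma oadd0 : left_id ozero oadd.
Proof.
move=> q; elim/frac_ind: q => s a Ts; rewrite /ozero (@expand 1 0 s s) ?mulr1 //.
by rewrite add_same // mulr0 add0r.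
Qed.
Lemma oaddN : left_inverse ozero oopp oadd.
Proof.
move=> q; elim/frac_ind: q => s a Ts; rewrite opp_spec // add_same // addNr.
by rewrite /ozero (@expand 1 0 s s) ?mulr1 ?mulr0.
Qed.
Lemma omulA : associative omul.
Proof.
move=> q1 q2 q3; elim/frac_ind: q1 => s a Ts; elim/frac_ind: q2 => t b Tt.
elim/frac_ind: q3 => r c Tr.
have [w [z [Tw Ew]]] := Tore b Tr.
have [u [x [Tu Eu]]] := Tore a Tt.
have [v [n [Tv Ev]]] := Tore x Tw.
rewrite (mul_spec b Ts Tt Tu Eu) (mul_spec c Tt Tr Tw Ew).
rewrite (@mul_spec (u*s) (x*b) r c v (n*z)); [| exact: TM | done | done | by rewrite mulrA Ev -!mulrA Ew].
rewrite (@mul_spec s a (w*t) (z*c) (v*u) n); [by rewrite !mulrA | done | exact: TM | exact: TM | by rewrite -mulrA Eu !mulrA Ev].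
Qed.
Lemma omul1 : left_id oone omul.
Proof.
move=> q; elim/frac_ind: q => t b Tt; rewrite /oone (@mul_spec _ _ _ _ t 1) //.
  by rewrite mulr1 mul1r.
by rewrite mulr1 mul1r.
Qed.
Lemma omulr1 : right_id oone omul.
Proof.
move=> q; elim/frac_ind: q => s a Ts; rewrite /oone (@mul_spec _ _ _ _ 1 a) //.
  by rewrite mulr1 mul1r.
by rewrite mulr1 mul1r.
Qed.
Lemma omulDl : left_distributive omul oadd.
Proof.
move=> q1 q2 q3; elim/frac_ind: q1 => s1 a Ts1; elim/frac_ind: q2 => s2 b Ts2.
elim/frac_ind: q3 => t c Tt.
have [d [c1 [c2 [Td E1 E2]]]] := common2 Ts1 Ts2.
rewrite (expand a Ts1 Td E1) (expand b Ts2 Td E2) add_same //.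
have [u1 [x1 [Tu1 F1]]] := Tore (c1 * a) Tt.
have [u2 [x2 [Tu2 F2]]] := Tore (u1 * (c2 * b)) Tt.
have Tv : T (u2 * u1) by exact: TM.
rewrite (@mul_spec d (c1 * a + c2 * b) t c (u2 * u1) (u2 * x1 + x2)) //; last first.
  by rewrite mulrDr mulrDl -!mulrA F1 F2.
rewrite (@mul_spec d (c1 * a) t c (u2 * u1) (u2 * x1)) //; last by rewrite -!mulrA F1.
rewrite (@mul_spec d (c2 * b) t c (u2 * u1) x2) //; last by rewrite -mulrA F2.
by rewrite add_same; [rewrite mulrDl|exact: TM].
Qed.
Lemma omulDr : right_distributive omul oadd.
Proof.
move=> q1 q2 q3; elim/frac_ind: q1 => s a Ts; elim/frac_ind: q2 => s2 b Ts2.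
elim/frac_ind: q3 => s3 c Ts3.
have [d [c2 [c3 [Td E2 E3]]]] := common2 Ts2 Ts3.
rewrite (expand b Ts2 Td E2) (expand c Ts3 Td E3) add_same //.
have [u [x [Tu F]]] := Tore a Td.
rewrite !(mul_spec _ Ts Td Tu F) add_same; last exact: TM.
by rewrite mulrDr.
Qed.

HB.instance Definition _ := GRing.isPzRing.Build OQ
  oaddA oaddC oadd0 oaddN omulA omul1 omulr1 omulDl omulDr.

Definition osig (a : A) : OQ := frac 1 a.

Lemma osig_nmod : nmod_morphism osig.
Proof.
split=> // x y; rewrite /osig.
have -> : frac 1 x + frac 1 y = oadd (frac 1 x) (frac 1 y) by [].
by rewrite add_same.
Qed.
Lemma osig_mon : monoid_morphism osig.
Proof.
split=> // x y; rewrite /osig.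
have -> : frac 1 x * frac 1 y = omul (frac 1 x) (frac 1 y) by [].
by rewrite (@mul_spec _ _ _ _ 1 x) ?mul1r ?mulr1.
Qed.
HB.instance Definition _ := GRing.isNmodMorphism.Build A OQ osig osig_nmod.
HB.instance Definition _ := GRing.isMonoidMorphism.Build A OQ osig osig_mon.

Lemma ore_exists_sec :
  exists (Q : pzRingType) (sigma : {rmorphism A -> Q}), is_left_ore_loc T sigma.
Proof.
exists OQ, osig; split.
- move=> t Tt; exists (frac t 1); split.
    change (omul (frac t 1) (frac 1 t) = frac 1 1).
    rewrite (@mul_spec _ _ _ _ 1 1) ?mul1r ?mulr1 //.
    by rewrite (@expand 1 1 t t) ?mulr1.
  change (omul (frac 1 t) (frac t 1) = frac 1 1).
  by rewrite (@mul_spec _ _ _ _ 1 1) ?mul1r ?mulr1.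
- elim/frac_ind=> s a Ts; exists s, a, (frac s 1); split => //.
  + change (omul (frac s 1) (frac 1 s) = frac 1 1).
    rewrite (@mul_spec _ _ _ _ 1 1) ?mul1r ?mulr1 //.
    by rewrite (@expand 1 1 s s) ?mulr1.
  + change (omul (frac 1 s) (frac s 1) = frac 1 1).
    by rewrite (@mul_spec _ _ _ _ 1 1) ?mul1r ?mulr1.
  + change (frac s a = omul (frac s 1) (frac 1 a)).
    by rewrite (@mul_spec _ _ _ _ 1 1) ?mul1r ?mulr1.
- move=> a; split.
    change (frac 1 a = frac 1 0 -> ass_l T a).
    move/fracP => /(_ T1 T1) /(_ 1 1 erefl); by rewrite !mul1r subr0.
  move=> Ha; change (frac 1 a = frac 1 0); apply/fracP => // x y /=.
  rewrite !mulr1 => ->; rewrite mulr0 subr0; exact: asslM.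
Qed.

End OreLoc.

Lemma ore_exists (A : pzRingType) (T : A -> Prop) :
  T 1 -> (forall s t, T s -> T t -> T (s * t)) -> left_ore T ->
  (forall t, T t -> lC t) ->
  exists (Q : pzRingType) (sigma : {rmorphism A -> Q}), is_left_ore_loc T sigma.
Proof. move=> T1 TM To Tr; exact: ore_exists_sec. Qed.

Lemma qpi_eq0 (B : pzRingType) (I : ideal B) (x : B) : qpi I x = 0 <-> I x.
Proof.
have -> : (0 : quot I) = qpi I 0 by rewrite rmorph0.
by split=> [/qpiP|H]; [rewrite subr0|apply/qpiP; rewrite subr0].
Qed.

Lemma ideal_all (B : pzRingType) (I : ideal B) : I 1 -> forall x, I x.
Proof. by move=> H x; case: (idealP I) => _ _ _ HR; have := HR x 1 H; rewrite mul1r. Qed.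

Lemma alg_inv (C : pzRingType) (y x : C) : y * x = 1 -> forall u v, x * u = x * v -> u = v.
Proof. by move=> H u v E; rewrite -(mul1r u) -(mul1r v) -H -!mulrA E. Qed.

Section General.
Variables (A : pzRingType) (T : A -> Prop).
Hypotheses (T1 : T 1) (TM : forall s t, T s -> T t -> T (s * t))
  (Talm : almost_left_ore T).

Definition paT := prime_a_ideal T.
Definition pT := image_set (qpi paT) T.

Lemma pa_reg t : T t -> lC (qpi paT t).
Proof.
move=> Tt; elim/qpi_ind => b; rewrite -rmorphM => /qpi_eq0 Hbt.
apply/qpi_eq0 => J HJ; have := Hbt J HJ; move/qpi_eq0; rewrite rmorphM.
by move/(HJ t Tt)/qpi_eq0.
Qed.

Lemma pT_reg y : pT y -> lC y.
Proof. by case=> t [Tt ->]; exact: pa_reg. Qed.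

Lemma oreR r t : T t -> exists s0 r0, T s0 /\ qpi paT (s0 * r) = qpi paT (r0 * t).
Proof.
move=> Tt; have [s1 [s2 [r1 [Ts1 Ts2 E]]]] := Talm r Tt.
exists s1, r1; split => //; apply/qpiP; apply/qpi_eq0.
apply: (pa_reg Ts2); by rewrite -rmorphM E rmorph0.
Qed.

Lemma pT1 : pT 1. Proof. by exists 1; rewrite rmorph1. Qed.
Lemma pTM s t : pT s -> pT t -> pT (s * t).
Proof. by case=> s0 [Ts0 ->] [t0 [Tt0 ->]]; exists (s0 * t0); rewrite rmorphM; split => //; exact: TM. Qed.
Lemma pT_ore : left_ore pT.
Proof.
move=> r s [t [Tt ->]]; elim/qpi_ind: r => r.
have [s0 [r0 [Ts0 E]]] := oreR r Tt.
by exists (qpi paT s0), (qpi paT r0); split; [exists s0|rewrite -!rmorphM].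
Qed.
Lemma pT_den : left_denominator pT.
Proof.
split; first exact: pT_ore.
move=> r s Hs E; exists 1; split; first exact: pT1.
by rewrite mul1r; exact: (pT_reg Hs E).
Qed.

Section Univ.
Variables (Q : pzRingType) (sigma : {rmorphism quot paT -> Q}).
Hypothesis Hloc : is_left_ore_loc pT sigma.
Variables (C : pzRingType) (g : {rmorphism A -> C}).
Hypothesis Hg : inverts g T.

Lemma gpa x : paT x -> g x = 0.
Proof.
have HJ : is_ideal (fun x => g x = 0).
  split; first exact: rmorph0.
  - by move=> x1 y1 H1 H2; rewrite rmorphB H1 H2 subr0.
  - by move=> r x1 H1; rewrite rmorphM H1 mulr0.
  - by move=> r x1 H1; rewrite rmorphM H1 mul0r.
move=> Hx; apply: (Hx (Ideal HJ)) => t Tt; elim/qpi_ind => b.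
rewrite -rmorphM => /qpi_eq0 /= Hbt; apply/qpi_eq0 => /=.
have [y [Hy1 Hy2]] := Hg Tt.
by rewrite -(mulr1 (g b)) -Hy2 mulrA -rmorphM Hbt mul0r.
Qed.

Lemma gE x y : qpi paT x = qpi paT y -> g x = g y.
Proof. by move/qpiP/gpa; rewrite rmorphB => /eqP; rewrite subr_eq0 => /eqP. Qed.

Lemma sigE x y : sigma (qpi paT x) = sigma (qpi paT y) -> g x = g y.
Proof.
case: Hloc => _ _ Hker.
move/eqP; rewrite -subr_eq0 -!rmorphB => /eqP /Hker [w [[w0 [Tw0 ->]] Hw]].
move: Hw; rewrite -rmorphM => /qpi_eq0 /gpa; rewrite rmorphM rmorphB => H.
have [y0 [Hy1 Hy2]] := Hg Tw0.
apply/eqP; rewrite -subr_eq0; apply/eqP.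
by rewrite -(mul1r (_ - _)) -Hy1 -mulrA H mulr0.
Qed.

Lemma gcancel t u v : T t -> g t * u = g t * v -> u = v.
Proof. by move=> Tt E; have [y [Hy1 _]] := Hg Tt; exact: alg_inv Hy1 _ _ E. Qed.

Definition ginv (t : A) : C :=
  match pselect (exists y, y * g t = 1 /\ g t * y = 1) with
  | left H => proj1_sig (cid H) | right _ => 0 end.
Lemma ginvP t : T t -> ginv t * g t = 1 /\ g t * ginv t = 1.
Proof.
move=> Tt; rewrite /ginv; case: pselect => [H|N]; first by case: (cid H).
by exfalso; apply: N; exact: Hg.
Qed.

Definition hdata (q : Q) : A * A :=
  match pselect (exists p : A * A, T p.1 /\ sigma (qpi paT p.1) * q = sigma (qpi paT p.2)) with
  | left H => proj1_sig (cid H) | right _ => (1, 0) end.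
Lemma hdataP q : T (hdata q).1 /\ sigma (qpi paT (hdata q).1) * q = sigma (qpi paT (hdata q).2).
Proof.
rewrite /hdata; case: pselect => [H|N]; first by case: (cid H).
exfalso; apply: N; case: Hloc => _ Hform _.
have [t [a [y [[t0 [Tt0 ->]] Hy1 Hy2 ->]]]] := Hform q.
exists (t0, repr a); split => //=.
by rewrite qpi_repr mulrA Hy2 mul1r.
Qed.

Definition hmap (q : Q) : C := ginv (hdata q).1 * g (hdata q).2.

Lemma hP t a q : T t -> sigma (qpi paT t) * q = sigma (qpi paT a) -> g t * hmap q = g a.
Proof.
move=> Tt Hq; have [Tt1 Hq1] := hdataP q; rewrite /hmap.
set t1 := (hdata q).1 in Tt1 Hq1 *; set a1 := (hdata q).2 in Hq1 *.
have [s0 [r0 [Ts0 E]]] := oreR t Tt1.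
have E' := congr1 sigma E; rewrite !rmorphM in E'.
have E2 : g (s0 * a) = g (r0 * a1).
  by apply: sigE; rewrite !rmorphM -Hq -Hq1 !mulrA E'.
have E1 := gE E.
apply: (gcancel Ts0); rewrite !rmorphM in E1 E2.
have [Hi1 Hi2] := ginvP Tt1.
by rewrite mulrA E1 -mulrA (mulrA (g t1)) Hi2 mul1r E2.
Qed.

Lemma h_add : {morph hmap : x y / x + y}.
Proof.
move=> q1 q2; have [Tt1 Hq1] := hdataP q1; have [Tt2 Hq2] := hdataP q2.
set t1 := (hdata q1).1 in Tt1 Hq1; set a1 := (hdata q1).2 in Hq1.
set t2 := (hdata q2).1 in Tt2 Hq2; set a2 := (hdata q2).2 in Hq2.
have [s0 [r0 [Ts0 E]]] := oreR t1 Tt2.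
have E' := congr1 sigma E.
have Ts0t1 : T (s0 * t1) by exact: TM.
have H : sigma (qpi paT (s0 * t1)) * (q1 + q2) = sigma (qpi paT (s0 * a1 + r0 * a2)).
  by rewrite mulrDr {2}E' !rmorphD !rmorphM -!mulrA Hq1 Hq2.
apply: (gcancel Ts0t1); rewrite (hP Ts0t1 H) mulrDr.
rewrite {2}(gE E) !rmorphM -!mulrA (hP Tt1 Hq1) (hP Tt2 Hq2).
by rewrite rmorphD !rmorphM.
Qed.

Lemma h_mul : {morph hmap : x y / x * y}.
Proof.
move=> q1 q2; have [Tt1 Hq1] := hdataP q1; have [Tt2 Hq2] := hdataP q2.
set t1 := (hdata q1).1 in Tt1 Hq1; set a1 := (hdata q1).2 in Hq1.
set t2 := (hdata q2).1 in Tt2 Hq2; set a2 := (hdata q2).2 in Hq2.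
have [s0 [r0 [Ts0 E]]] := oreR a1 Tt2.
have E' := congr1 sigma E; rewrite !rmorphM in E'.
have G' := gE E; rewrite !rmorphM in G'.
have Ts0t1 : T (s0 * t1) by exact: TM.
have H : sigma (qpi paT (s0 * t1)) * (q1 * q2) = sigma (qpi paT (r0 * a2)).
  rewrite !rmorphM -!mulrA (mulrA (sigma (qpi paT t1))) Hq1 mulrA E'.
  by rewrite -mulrA Hq2.
apply: (gcancel Ts0t1); rewrite (hP Ts0t1 H) (rmorphM g s0 t1) (rmorphM g r0 a2) -(mulrA (g s0)) (mulrA (g t1)).
by rewrite (hP Tt1 Hq1) mulrA G' -mulrA (hP Tt2 Hq2).
Qed.

Lemma h_sig a : hmap (sigma (qpi paT a)) = g a.
Proof.
by have := @hP 1 a (sigma (qpi paT a)) T1; rewrite !rmorph1 !mul1r; apply.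
Qed.

Lemma h_nmod : nmod_morphism hmap.
Proof.
split; last exact: h_add.
by have := h_sig 0; rewrite !rmorph0.
Qed.
Lemma h_mon : monoid_morphism hmap.
Proof.
split; last exact: h_mul.
by have := h_sig 1; rewrite !rmorph1.
Qed.
HB.instance Definition _ := GRing.isNmodMorphism.Build Q C hmap h_nmod.
HB.instance Definition _ := GRing.isMonoidMorphism.Build Q C hmap h_mon.

Lemma univ_h : exists h : {rmorphism Q -> C},
      (forall a, h (sigma (qpi paT a)) = g a) /\
      (forall h' : {rmorphism Q -> C}, (forall a, h' (sigma (qpi paT a)) = g a) ->
         forall b, h' b = h b).
Proof.
exists hmap; split; first exact: h_sig.
move=> h' Hh' b; have [Tt Hb] := hdataP b.
apply: (gcancel Tt); rewrite (hP Tt Hb) -Hh' -Hh' -rmorphM; congr (h' _).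
by [].
Qed.
End Univ.

Lemma univ_c (Q : pzRingType) (sigma : {rmorphism quot paT -> Q}) :
  is_left_ore_loc pT sigma -> is_univ_loc T (sigma \o qpi paT : {rmorphism A -> Q}).
Proof.
move=> Hloc; split.
  move=> t Tt; case: Hloc => Hinv _ _.
  have [y [H1 H2]] := Hinv (qpi paT t) (ex_intro _ t (conj Tt erefl)).
  by exists y.
move=> C g Hg; exact: (univ_h Hloc Hg).
Qed.

Lemma GL2 : ~ (forall x, prime_a T x) -> left_localizable T.
Proof.
move=> Hn.
have [Q [sigma Hloc]] := ore_exists pT1 pTM pT_ore pT_reg.
exists Q, (sigma \o qpi paT : {rmorphism A -> Q}); split.
- exact: univ_c.
- move=> E; apply: Hn; apply: (@ideal_all _ paT).
  case: Hloc => _ _ Hker.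
  have : sigma 1 = 0 by rewrite rmorph1.
  move/Hker => [t [[t0 [Tt0 ->]] Ht]].
  have := pa_reg Tt0; rewrite mulr1 in Ht; rewrite Ht => Hreg.
  by apply/qpi_eq0; rewrite rmorph1; apply: Hreg; rewrite mulr0.
- move=> b; case: Hloc => _ Hform _.
  have [t [a [y [[t0 [Tt0 ->]] Hy1 Hy2 ->]]]] := Hform b.
  by exists t0, (repr a), y; split => //=; rewrite qpi_repr.
Qed.

Lemma part_b r : ass_A T r <-> ass_l pT (qpi paT r).
Proof.
have [Q [sigma Hloc]] := ore_exists pT1 pTM pT_ore pT_reg.
have Hu := univ_c Hloc.
split.
  move=> Hr; have := Hr _ _ Hu => /= H.
  by case: Hloc => _ _ Hker; apply/Hker.
move=> Hr B f [Hinv Huniv].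
have [h [Hh _]] := (univ_c Hloc).2 B f Hinv.
rewrite -Hh /=; case: Hloc => _ _ Hker.
have E : sigma (qpi paT r) = 0 by apply/Hker.
by rewrite E rmorph0.
Qed.

End General.

Lemma GL1 (A : pzRingType) (T : A -> Prop) : left_localizable T -> ~ (forall x, prime_a T x).
Proof.
move=> [B [f [[Hinv _] H10 _]]] Hall.
have HJ : is_ideal (fun x => f x = 0).
  split; first exact: rmorph0.
  - by move=> x1 y1 H1 H2; rewrite rmorphB H1 H2 subr0.
  - by move=> r x1 H1; rewrite rmorphM H1 mulr0.
  - by move=> r x1 H1; rewrite rmorphM H1 mul0r.
apply: H10; rewrite -(rmorph1 f); apply: (Hall 1 (Ideal HJ)) => t Tt.
elim/qpi_ind => b; rewrite -rmorphM => /qpi_eq0 /= Hbt; apply/qpi_eq0 => /=.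
have [y [Hy1 Hy2]] := Hinv t Tt.
by rewrite -(mulr1 (f b)) -Hy2 mulrA -rmorphM Hbt mul0r.
Qed.

Lemma loc_iff (A : pzRingType) (T : A -> Prop) :
  T 1 -> (forall s t, T s -> T t -> T (s * t)) -> almost_left_ore T ->
  left_localizable T <-> ~ (forall x, prime_a T x).
Proof. by move=> T1 TM Ta; split; [exact: GL1|exact: GL2]. Qed.

Lemma pa_quot (A : pzRingType) (T : A -> Prop) (I : ideal A)
  (HI : forall J : ideal A, (forall t, T t -> lC (qpi J t)) -> forall x, I x -> J x) :
  (forall x : quot I, prime_a (image_set (qpi I) T) x) <-> (forall x, prime_a T x).
Proof.
split=> Hall.
- apply: (@ideal_all _ (prime_a_ideal T)) => J HJ.
  have HIJ := HI J HJ.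
  have key : forall a, J (repr (qpi I a)) <-> J a.
    move=> a; have Ha := HIJ _ (reprP I a); case: (idealP J) => J0 JB _ _.
    split=> H.
      have := JB _ _ H Ha; by rewrite opprB addrC subrK.
    have := JB _ _ Ha (JB _ _ J0 H); by rewrite sub0r opprK subrK.
  have HJ' : is_ideal (fun q : quot I => J (repr q)).
    case: (idealP J) => J0 JB JL JR; split.
    + by rewrite -(rmorph0 (qpi I)); apply/(key 0).
    + move=> x y; elim/qpi_ind: x => x; elim/qpi_ind: y => y.
      by rewrite -rmorphB => /(key x) Hx /(key y) Hy; apply/(key (x - y)); exact: JB.
    + move=> r x; elim/qpi_ind: r => r; elim/qpi_ind: x => x.
      by rewrite -rmorphM => /(key x) Hx; apply/(key (r * x)); exact: JL.
    + move=> r x; elim/qpi_ind: r => r; elim/qpi_ind: x => x.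
      by rewrite -rmorphM => /(key x) Hx; apply/(key (x * r)); exact: JR.
  pose J' := Ideal HJ'.
  suff HJr : forall t', image_set (qpi I) T t' -> lC (qpi J' t').
    by have := Hall 1 J' HJr; rewrite /= -(rmorph1 (qpi I)); move/(key 1).
  move=> t' [t [Tt ->]]; elim/qpi_ind => b'; elim/qpi_ind: b' => b.
  rewrite -rmorphM -rmorphM => /qpi_eq0 /= /(key (b * t)) Hbt.
  apply/qpi_eq0 => /=; apply/(key b).
  have : qpi J b * qpi J t = 0 by rewrite -rmorphM; apply/qpi_eq0.
  by move/(HJ t Tt)/qpi_eq0.
- apply: (@ideal_all _ (prime_a_ideal (image_set (qpi I) T))) => J' HJ'.
  have HJ : is_ideal (fun a => J' (qpi I a)).
    case: (idealP J') => J0 JB JL JR; split.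
    + by rewrite rmorph0.
    + by move=> x y Hx Hy; rewrite rmorphB; exact: JB.
    + by move=> r x Hx; rewrite rmorphM; exact: JL.
    + by move=> r x Hx; rewrite rmorphM; exact: JR.
  pose J := Ideal HJ.
  have := Hall 1 J; rewrite /= rmorph1; apply.
  move=> t Tt; elim/qpi_ind => b; rewrite -rmorphM => /qpi_eq0 /= Hbt.
  apply/qpi_eq0 => /=.
  have : qpi J' (qpi I b) * qpi J' (qpi I t) = 0.
    by rewrite -rmorphM -rmorphM; apply/qpi_eq0.
  by move/(HJ' (qpi I t) (ex_intro _ t (conj Tt erefl)))/qpi_eq0.
Qed.

Unset Implicit Arguments.

Theorem theorem4p2 (R : pzRingType) (S : R -> Prop) :
  mult_set S -> almost_left_ore S ->
  let a := ass_A S in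
  let ar := gen_ideal_ideal (ass_r S) in
  let Sr := image_set (qpi ar) S in
  (* 1 *)
  left_ore Sr /\
  (* 2 *)
  [<-> left_localizable S;
       left_localizable Sr;
       ~ (forall x : quot ar, prime_a Sr x);
       ~ (forall x : R, prime_a S x)] /\
  (* 3 *)
  (~ (forall x : R, prime_a S x) ->
   let pa := prime_a_ideal S in
   let pS := image_set (qpi pa) S in
   [/\ (* (a) *) left_denominator pS /\ (forall y, pS y -> lC y),
       (* (b) *) (forall r : R, a r <-> ass_l pS (qpi pa r)) &
       (* (c) *) forall (Q : pzRingType) (sigma : {rmorphism quot pa -> Q}),
                   is_left_ore_loc pS sigma ->
                   is_univ_loc S (sigma \o qpi pa : {rmorphism R -> Q})]).
Proof.
move=> [SM S1 S0] Salm a ar Sr.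
have Hore : left_ore Sr.
  move=> r s [s0 [Ts0 ->]]; elim/qpi_ind: r => r.
  have [s1 [s2 [r1 [Ts1 Ts2 E]]]] := Salm s0 r Ts0.
  exists (qpi ar s1), (qpi ar r1); split; first by exists s1.
  rewrite -!rmorphM; apply/qpiP => J HJ HX; apply: HX; exists s2; split => //.
have Sr1 : Sr 1 by exists 1; rewrite rmorph1.
have SrM : forall s t, Sr s -> Sr t -> Sr (s * t).
  by move=> s t [s0 [Ts0 ->]] [t0 [Tt0 ->]]; exists (s0 * t0); rewrite rmorphM; split => //; exact: SM.
have Sralm : almost_left_ore Sr.
  move=> s r Hs; have [s' [r' [Hs' E]]] := Hore r s Hs.
  by exists s', 1, r'; split => //; rewrite E subrr mul0r.
split => //; split.
- have E03 := loc_iff S1 SM Salm.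
  have E12 := loc_iff Sr1 SrM Sralm.
  have E23 : (forall x : quot ar, prime_a Sr x) <-> (forall x : R, prime_a S x).
    apply: pa_quot => J HJ x Hx; apply: Hx; first exact: (idealP J).
    move=> r [t [Tt E]]; apply/qpi_eq0; apply: (HJ t Tt).
    by rewrite -rmorphM E rmorph0.
  tfae.
  + move/E03 => H; apply/E12 => H'; apply: H; exact/E23.
  + by move/E12.
  + by move=> H H'; apply: H; exact/E23.
  + by move/E03.
- move=> Hn pa pS; split.
  + by split; [exact: (pT_den S1 Salm)|move=> y; exact: (@pT_reg R S y)].
  + by move=> r; exact: (part_b S1 SM Salm).
  + by move=> Q sigma Hloc; exact: (univ_c S1 SM Salm Hloc).
Qed.
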